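(* Let $\mathcal{H}$ be a complex Hilbert space, let $A\in\mathcal{B}(\mathcal{H})$ be a nonzero positive operator, and let $\mathbb{A}=\begin{pmatrix}A&O\\O&A\end{pmatrix}$ on $\mathcal{H}\oplus\mathcal{H}$. Let $P,Q,R,S\in\mathcal{B}_A(\mathcal{H})$. Then $$\omega_{\mathbb{A}}\left[\begin{pmatrix}P&Q\\R&S\end{pmatrix}\right]\leq\frac12\Big(\omega_A(P)+\omega_A(S)+\sqrt{(\omega_A(P)-\omega_A(S))^2+(\omega_A(Q+R)+\omega_A(Q-R))^2}\Big),$$ and moreover the right-hand side is at most $\max\{\omega_A(P),\omega_A(S)\}+\frac{\omega_A(Q+R)+\omega_A(Q-R)}{2}$.
   Context: For a positive operator $A$ on $\mathcal{H}$, $\langle x,y\rangle_A:=\langle Ax,y\rangle$ and $\|x\|_A:=\sqrt{\langle x,x\rangle_A}$. $\mathcal{B}_A(\mathcal{H})$ is the set of $T\in\mathcal{B}(\mathcal{H})$ with $\mathcal{R}(T^*A)\subseteq\mathcal{R}(A)$ (operators admitting an $A$-adjoint). $\omega_A(T):=\sup\{|\langle Tx,x\rangle_A|:x\in\mathcal{H},\|x\|_A=1\}$. $\omega_{\mathbb{A}}$ is defined analogously on $\mathcal{H}\oplus\mathcal{H}$ with $\langle (x_1,x_2),(y_1,y_2)\rangle_{\mathbb{A}}=\langle x_1,y_1\rangle_A+\langle x_2,y_2\rangle_A$. *)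

(* Defs.v *)
From mathcomp Require Import all_boot all_order all_algebra.
From mathcomp Require Import all_classical all_reals.
From mathcomp Require Export complex.
Import Order.TTheory GRing.Theory Num.Theory.
Set Implicit Arguments. Unset Strict Implicit. Unset Printing Implicit Defensive.
Local Open Scope ring_scope.

Definition ipnorm (RR : realType) (W : Type) (ip : W -> W -> RR[i]) (x : W) : RR :=
  Num.sqrt (complex.Re (ip x x)).

Section Hilbert.
Variable RR : realType.
Local Notation C := RR[i].
Variable V : lmodType C.


Definition is_hilbert (ip : V -> V -> C) : Prop :=
  [/\ (forall (a : C) (x y z : V), ip (a *: x + y) z = a * ip x z + ip y z),
      (forall x y : V, ip y x = (ip x y)^*),
      (forall x : V, 0 <= ip x x),
      (forall x : V, ip x x = 0 -> x = 0) &
      (forall u : nat -> V,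
         (forall e : RR, 0 < e -> exists N : nat, forall m n : nat,
            (N <= m)%N -> (N <= n)%N -> ipnorm ip (u m - u n) < e) ->
         exists l : V, forall e : RR, 0 < e -> exists N : nat, forall n : nat,
            (N <= n)%N -> ipnorm ip (u n - l) < e)].

(* T (assumed linear) is bounded *)
Definition bounded_op (ip : V -> V -> C) (T : V -> V) : Prop :=
  exists c : RR, forall x : V, ipnorm ip (T x) <= c * ipnorm ip x.

Definition positive_op (ip : V -> V -> C) (A : V -> V) : Prop :=
  bounded_op ip A /\ forall x : V, 0 <= ip (A x) x.

Definition is_adjoint (ip : V -> V -> C) (T Ts : V -> V) : Prop :=
  forall x y : V, ip (T x) y = ip x (Ts y).

(* B_A(H): T in B(H) with R(T^* A) included in R(A) *)
Definition in_BA (ip : V -> V -> C) (A T : V -> V) : Prop :=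
  bounded_op ip T /\
  exists Ts : V -> V, is_adjoint ip T Ts /\
    forall x : V, exists y : V, Ts (A x) = A y.

Definition ipA (ip : V -> V -> C) (A : V -> V) : V -> V -> C :=
  fun x y => ip (A x) y.

End Hilbert.

Definition omega (RR : realType) (W : Type) (ipS : W -> W -> RR[i])
    (T : W -> W) : RR :=
  sup [set Normc.normc (ipS (T x) x) | x in [set x | ipnorm ipS x = 1]].

Definition ip2 (RR : realType) (V : lmodType RR[i]) (ip : V -> V -> RR[i])
    (u v : (V * V)%type) : RR[i] := ip u.1 v.1 + ip u.2 v.2.

Definition diag2 (RR : realType) (V : lmodType RR[i]) (A : V -> V)
    (u : (V * V)%type) : (V * V)%type := (A u.1, A u.2).

Definition block2 (RR : realType) (V : lmodType RR[i]) (P Q R S : V -> V)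
    (u : (V * V)%type) : (V * V)%type :=
  (P u.1 + Q u.2, R u.1 + S u.2).

(* Main.v *)
Require Import Defs.
From mathcomp Require Import all_boot all_order all_algebra.
From mathcomp Require Import all_classical all_reals.
From mathcomp Require Import complex ring lra.
Import Order.TTheory GRing.Theory Num.Theory.
Local Open Scope ring_scope.

Section Form.
Variable RR : realType.
Local Notation C := RR[i].
Variable W : lmodType C.
Variable B : W -> W -> C.
Hypothesis BL : forall (a : C) u v w, B (a *: u + v) w = a * B u w + B v w.
Hypothesis BR : forall (a : C) u v w, B u (a *: v + w) = conjc a * B u v + B u w.
Hypothesis Bpos : forall u, 0 <= B u u.

Lemma B0l w : B 0 w = 0.
Proof.
have h := BL 1 0 0 w; rewrite scaler0 addr0 mul1r in h.
have: B 0 w + B 0 w - B 0 w = B 0 w - B 0 w by rewrite -h.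
by rewrite addrK subrr.
Qed.

Lemma B0r w : B w 0 = 0.
Proof.
have h := BR 1 w 0 0; rewrite scaler0 addr0 in h.
have e : conjc (1 : C) = 1 by apply/eqP; rewrite eq_complex /= oppr0 !eqxx.
rewrite e mul1r in h.
have: B w 0 + B w 0 - B w 0 = B w 0 - B w 0 by rewrite -h.
by rewrite addrK subrr.
Qed.

Lemma BD u v w : B (u + v) w = B u w + B v w.
Proof. by rewrite -[u]scale1r BL mul1r scale1r. Qed.

Lemma BZ a u w : B (a *: u) w = a * B u w.
Proof. by rewrite -[a *: u]addr0 BL B0l addr0. Qed.

Lemma BDr u v w : B w (u + v) = B w u + B w v.
Proof.
have e : conjc (1 : C) = 1 by apply/eqP; rewrite eq_complex /= oppr0 !eqxx.
by rewrite -[u]scale1r BR e mul1r scale1r.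
Qed.

Lemma BZr a u w : B w (a *: u) = conjc a * B w u.
Proof. by rewrite -[a *: u]addr0 BR B0r addr0. Qed.

Lemma Bexp u v a : B (u + a *: v) (u + a *: v) =
  B u u + conjc a * B u v + a * B v u + a * conjc a * B v v.
Proof. rewrite !BD !BDr !BZ !BZr. ring. Qed.

Lemma ge0_ReIm (z : C) : 0 <= z -> complex.Im z = 0 /\ 0 <= complex.Re z.
Proof. rewrite lecE => /andP[/eqP h1 h2]; split => //; rewrite h1. Qed.

Lemma Bherm u v : B v u = conjc (B u v).
Proof.
have h1 := Bpos (u + 1 *: v).
have h2 := Bpos (u + 'i%C *: v).
rewrite Bexp in h1; rewrite Bexp in h2.
move: h1 h2 (Bpos u) (Bpos v).
move: (B u u) (B u v) (B v u) (B v v) => [a1 a2] [b1 b2] [c1 c2] [d1 d2].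
simpc. move=> /andP[/eqP h1 _] /andP[/eqP h2 _] /andP[/eqP h3 _] /andP[/eqP h4 _].
rewrite /conjc; apply/eqP; rewrite eq_complex /=; apply/andP; split; apply/eqP; lra.
Qed.


Lemma quad (r q : RR) : 0 <= q -> (forall t, 0 <= 2 * t * r + t ^+ 2 * q) -> r = 0.
Proof.
move=> q0 H; set t := - r / (q + 1).
have ht : t * (q + 1) = - r.
  by rewrite /t mulrAC -mulrA divff ?mulr1 // gt_eqF // ltr_wpDl.
have h := H t.
have t0 : t ^+ 2 * (q + 2) <= 0 by nra.
have t2 : t ^+ 2 = 0.
  apply/eqP; rewrite eq_le sqr_ge0 andbT.
  have : 0 < q + 2 by lra.
  move=> p; rewrite -(pmulr_lle0 _ p); by [].
have : t = 0 by apply/eqP; rewrite -sqrf_eq0 t2.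
move=> t00; rewrite t00 mul0r in ht; lra.
Qed.

Lemma Bnull u : complex.Re (B u u) = 0 -> forall w, B u w = 0.
Proof.
move=> hu.
have Re0 : forall w, complex.Re (B u w) = 0.
  move=> w; apply: (@quad _ (complex.Re (B w w))).
    by case: (ge0_ReIm _ (Bpos w)).
  move=> t; have h := Bpos (u + (t%:C)%C *: w).
  rewrite Bexp (Bherm u w) in h.
  move: h hu; case: (B u u) => [a1 a2]; case: (B u w) => [b1 b2].
  case: (B w w) => [d1 d2] /=.
  rewrite /conjc; simpc. move=> /andP[_ h] h0; rewrite h0 in h.
  by nra.
move=> w; have h1 := Re0 w; have h2 := Re0 ('i%C *: w).
rewrite BZr in h2.
move: h1 h2; case: (B u w) => [b1 b2] /=; rewrite /conjc; simpc => h1 h2.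
apply/eqP; rewrite eq_complex /= h1; apply/andP; split => //; apply/eqP; lra.
Qed.


Definition Eset (T : W -> W) : set RR :=
  [set Normc.normc (B (T x) x) | x in [set x | ipnorm B x = 1]].

Lemma normc_ge0 (z : C) : 0 <= Normc.normc z.
Proof. by case: z => a b; rewrite /Normc.normc sqrtr_ge0. Qed.

Lemma normc_real (k : RR) : 0 <= k -> Normc.normc (k%:C)%C = k.
Proof.
move=> k0; rewrite /Normc.normc /= expr0n /= addr0 sqrtr_sqr ger0_norm //.
Qed.

Lemma omega_ge0 T : 0 <= omega B T.
Proof.
rewrite /omega; case: (pselect (has_sup (Eset T))) => [[[r [x hx xr]] ub] | nh].
  apply: le_trans (normc_ge0 (B (T x) x)) _; by apply: ub_le_sup => //; exists x.
by rewrite sup_out.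
Qed.

Lemma ub_omega T x : has_ubound (Eset T) -> ipnorm B x = 1 ->
  Normc.normc (B (T x) x) <= omega B T.
Proof. by move=> ub hx; apply: ub_le_sup => //; exists x. Qed.

Lemma Re_ge0 z : 0 <= complex.Re (B z z).
Proof. by case: (ge0_ReIm _ (Bpos z)). Qed.

Lemma omegaK T (Tz : forall a x, T (a *: x) = a *: T x) : has_ubound (Eset T) ->
  forall z, Normc.normc (B (T z) z) <= omega B T * complex.Re (B z z).
Proof.
move=> ub z; set n := complex.Re (B z z).
have : 0 <= n by apply: Re_ge0.
rewrite le_eqVlt => /orP[/eqP n0 | npos].
  have h := Bnull z (esym n0) (T z).
  rewrite (Bherm z (T z)) h -n0 mulr0.
  have -> : (0 : C)^*%C = 0 by apply/eqP; rewrite eq_complex /= oppr0 !eqxx.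
  by rewrite Normc.normc0.
set k := (Num.sqrt n)^-1.
have kk : k ^+ 2 * n = 1.
  rewrite /k exprVn sqr_sqrtr ?mulVf //; [by rewrite gt_eqF | by apply: ltW].
have cr : (k%:C)^*%C = (k%:C)%C.
  by apply/eqP; rewrite eq_complex /= oppr0 !eqxx.
have hB : B (T ((k%:C)%C *: z)) ((k%:C)%C *: z) = ((k ^+ 2)%:C)%C * B (T z) z.
  rewrite Tz BZ BZr cr mulrA; congr (_ * _); by simpc.
have hn : complex.Re (B ((k%:C)%C *: z) ((k%:C)%C *: z)) = 1.
  rewrite BZ BZr cr mulrA -kk /n; case: (B z z) => a b; by simpc.
have := ub_omega T ((k%:C)%C *: z) ub.
rewrite /ipnorm hn sqrtr1 hB Normc.normcM normc_real ?sqr_ge0 //.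
move=> /(_ erefl) h.
have N0 := normc_ge0 (B (T z) z).
have W0 := omega_ge0 T.
nra.
Qed.

End Form.
Lemma final_real (RR : realType) (p s c r nx ny N D : RR) :
  0 <= p -> 0 <= s -> 0 <= c -> 0 <= r -> r ^+ 2 = (p - s) ^+ 2 + c ^+ 2 ->
  0 <= nx -> 0 <= ny -> nx + ny = 1 ->
  N <= p * nx + s * ny + D ->
  (forall tau, 0 < tau -> D <= c / 2 * (tau * nx + ny / tau)) ->
  N <= (p + s + r) / 2.
Proof.
move=> p0 s0 c0 r0 hr nx0 ny0 hn hN hD.
set u := (s - p + r) / 2; set v := (p - s + r) / 2.
have u0 : 0 <= u by rewrite /u; nra.
have v0 : 0 <= v by rewrite /v; nra.
have uv : u * v = c ^+ 2 / 4 by rewrite /u /v; rewrite mulrC; nra.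
have key : D <= u * nx + v * ny.
  have [c00|cpos] := eqVneq c 0.
    have := hD 1 ltr01; rewrite c00 mul0r; nra.
  have cp : 0 < c by rewrite lt_def cpos.
  have up : 0 < u.
    rewrite lt_def u0 andbT; apply/eqP => u00.
    move: uv; rewrite u00 mul0r => /esym/eqP; rewrite mulf_eq0 sqrf_eq0 (negbTE cpos) /=.
    by rewrite invr_eq0 pnatr_eq0.
  have tp : 0 < 2 * u / c by apply: divr_gt0 => //; apply: mulr_gt0.
  have := hD _ tp.
  have -> : c / 2 * (2 * u / c * nx + ny / (2 * u / c)) = u * nx + c ^+ 2 / (4 * u) * ny.
    field. by rewrite gt_eqF // gt_eqF.
  have -> : c ^+ 2 / (4 * u) = v.
    have c2 : c ^+ 2 = 4 * (u * v) by rewrite uv; field.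
    rewrite c2; field; by rewrite gt_eqF.
  by [].
have : (p + s + r) / 2 = (p + u) * nx + (s + v) * ny.
  have hp : p + u = (p + s + r) / 2 by rewrite /u; field.
  have hs : s + v = (p + s + r) / 2 by rewrite /v; field.
  by rewrite hp hs -mulrDr hn mulr1.
move=> ->; nra.
Qed.

Lemma second_real (RR : realType) (p s c : RR) :
  0 <= p -> 0 <= s -> 0 <= c ->
  (p + s + Num.sqrt ((p - s) ^+ 2 + c ^+ 2)) / 2 <= Num.max p s + c / 2.
Proof.
move=> p0 s0 c0.
have h : Num.sqrt ((p - s) ^+ 2 + c ^+ 2) <= `|p - s| + c.
  rewrite -(ger0_norm (addr_ge0 (normr_ge0 (p - s)) c0)) -sqrtr_sqr.
  rewrite ler_wsqrtr //.
  have e : `|p - s| ^+ 2 = (p - s) ^+ 2 by rewrite -normrX ger0_norm ?sqr_ge0.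
  have := normr_ge0 (p - s); nra.
case: (leP p s) => ps.
  rewrite (ler0_norm (x := p - s)) ?subr_le0 // in h; lra.
rewrite (gtr0_norm (x := p - s)) ?subr_gt0 // in h; lra.
Qed.
Ltac cplx := apply/eqP; rewrite eq_complex /=; apply/andP; split; apply/eqP; simpc; try ring.
Section X. Variable RR : realType.
Lemma c1 : conjc (1 : RR[i]) = 1. Proof. cplx. Qed.
Lemma c2 : conjc (-1 : RR[i]) = -1. Proof. cplx. Qed.
Lemma c3 : conjc ('i : RR[i])%C = - 'i%C. Proof. cplx. Qed.
Lemma c4 : conjc (- 'i : RR[i])%C = 'i%C. Proof. cplx. Qed.
Lemma c5 : ('i : RR[i])%C * conjc 'i%C = 1. Proof. cplx. Qed.
Lemma c6 : (- 'i : RR[i])%C * conjc (- 'i)%C = 1. Proof. cplx. Qed.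
Lemma c7 (k : RR) (z : RR[i]) : complex.Re ((k%:C)%C * z) = k * complex.Re z. Proof. case: z => a b. by simpc. Qed.
Lemma c8 (z w : RR[i]) : complex.Re (z + w) = complex.Re z + complex.Re w. Proof. by case: z; case: w. Qed.
Lemma c9 (k : RR) : conjc (k%:C)%C = (k%:C)%C. Proof. cplx. Qed.
Lemma c10 (k l : RR) : (k%:C)%C * (l%:C)%C = ((k * l)%:C)%C. Proof. cplx. Qed.
Lemma c11 (z : RR[i]) : Normc.normc ('i%C * z) = Normc.normc z.
Proof. by rewrite Normc.normcM /Normc.normc /= expr0n expr1n add0r sqrtr1 mul1r. Qed.
End X.
Section Main.
Variables (RR : realType) (V : lmodType RR[i]) (ip : V -> V -> RR[i]) (A : {linear V -> V}).
Hypothesis hH : is_hilbert ip.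
Hypothesis hpos : forall x, 0 <= ip (A x) x.

Lemma cjDM (a b c : RR[i]) : (a * b + c)^* = conjc a * b^* + c^*.
Proof. by case: a => ? ?; case: b => ? ?; case: c => ? ?; apply/eqP; rewrite eq_complex /=; apply/andP; split; apply/eqP; ring. Qed.

Lemma BvL (a : RR[i]) u v w : ipA ip A (a *: u + v) w = a * ipA ip A u w + ipA ip A v w.
Proof. case: hH => lin _ _ _ _; by rewrite /ipA linearP lin. Qed.

Lemma BvR (a : RR[i]) u v w : ipA ip A u (a *: v + w) = conjc a * ipA ip A u v + ipA ip A u w.
Proof.
case: hH => lin herm _ _ _; rewrite /ipA herm lin cjDM -!herm //.
Qed.

Lemma Bvpos u : 0 <= ipA ip A u u.
Proof. exact: hpos. Qed.

Lemma B2L (a : RR[i]) u v w : ipA (ip2 ip) (diag2 A) (a *: u + v) w =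
  a * ipA (ip2 ip) (diag2 A) u w + ipA (ip2 ip) (diag2 A) v w.
Proof.
rewrite /ipA /ip2 /diag2 /=.
have := BvL a u.1 v.1 w.1; have := BvL a u.2 v.2 w.2; rewrite /ipA => -> ->; ring.
Qed.

Lemma B2R (a : RR[i]) u v w : ipA (ip2 ip) (diag2 A) u (a *: v + w) =
  conjc a * ipA (ip2 ip) (diag2 A) u v + ipA (ip2 ip) (diag2 A) u w.
Proof.
rewrite /ipA /ip2 /diag2 /=.
have := BvR a u.1 v.1 w.1; have := BvR a u.2 v.2 w.2; rewrite /ipA => -> ->; ring.
Qed.

Lemma B2pos u : 0 <= ipA (ip2 ip) (diag2 A) u u.
Proof. rewrite /ipA /ip2 /diag2 /=; apply: addr_ge0; exact: hpos. Qed.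


Variables (P Q R S : {linear V -> V}).
Local Notation Bv := (ipA ip A).
Local Notation B2 := (ipA (ip2 ip) (diag2 A)).
Local Notation nv x := (complex.Re (ipA ip A x x)).

Lemma BvD u v w : Bv (u + v) w = Bv u w + Bv v w. Proof. exact: (@BD _ _ _ BvL). Qed.
Lemma BvZ a u w : Bv (a *: u) w = a * Bv u w. Proof. exact: (@BZ _ _ _ BvL). Qed.
Lemma BvDr u v w : Bv w (u + v) = Bv w u + Bv w v. Proof. exact: (@BDr _ _ _ BvR). Qed.
Lemma BvZr a u w : Bv w (a *: u) = conjc a * Bv w u. Proof. exact: (@BZr _ _ _ BvR). Qed.
Lemma BvB u v w : Bv (u - v) w = Bv u w - Bv v w.
Proof. by rewrite -scaleN1r BvD BvZ mulN1r. Qed.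
Lemma Bv0l w : Bv 0 w = 0. Proof. exact: (@B0l _ _ _ BvL). Qed.
Lemma Bv0r w : Bv w 0 = 0. Proof. exact: (@B0r _ _ _ BvR). Qed.

Lemma norm1 (W : lmodType RR[i]) (B : W -> W -> RR[i]) x :
  0 <= complex.Re (B x x) -> ipnorm B x = 1 -> complex.Re (B x x) = 1.
Proof. by move=> h0; rewrite /ipnorm => h; rewrite -(sqr_sqrtr h0) h expr1n. Qed.

Lemma fexp (T : V -> V) (hT : forall a x y, T (x + a *: y) = T x + a *: T y) x y a :
  Bv (T (x + a *: y)) (x + a *: y) =
  Bv (T x) x + conjc a * Bv (T x) y + a * Bv (T y) x + a * conjc a * Bv (T y) y.
Proof. rewrite hT !BvD !BvDr !BvZ !BvZr; ring. Qed.

Lemma nsum x y a : a * conjc a = 1 -> (- a) * conjc (- a) = 1 -> conjc (- a) = - conjc a ->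
  nv (x + a *: y) + nv (x + (- a) *: y) = (nv x + nv y) *+ 2.
Proof.
move=> h1 h2 h3.
have e : Bv (x + a *: y) (x + a *: y) + Bv (x + (- a) *: y) (x + (- a) *: y)
   = (Bv x x + Bv y y) *+ 2.
  rewrite !(@Bexp _ _ _ BvL BvR) h1 h2 h3; rewrite mulr2n; ring.
by rewrite -c8 e !mulr2n !c8.
Qed.

Lemma normc3 (a b c : RR[i]) : Normc.normc (a - b - c) <=
  Normc.normc a + Normc.normc b + Normc.normc c.
Proof.
apply: le_trans (le_normcD _ _) _; rewrite normcN lerD2r.
by apply: le_trans (le_normcD _ _) _; rewrite normcN.
Qed.

Let T1 := fun x => Q x + R x.
Let T2 := fun x => Q x - R x.

Lemma T1lin a x y : T1 (x + a *: y) = T1 x + a *: T1 y.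
Proof. by rewrite /T1 (linearD Q) (linearD R) (linearZZ Q) (linearZZ R) scalerDr addrACA. Qed.
Lemma T2lin a x y : T2 (x + a *: y) = T2 x + a *: T2 y.
Proof. by rewrite /T2 (linearD Q) (linearD R) (linearZZ Q) (linearZZ R) scalerBr opprD addrACA. Qed.
Lemma T1Z a x : T1 (a *: x) = a *: T1 x.
Proof. by rewrite /T1 (linearZZ Q) (linearZZ R) scalerDr. Qed.
Lemma T2Z a x : T2 (a *: x) = a *: T2 x.
Proof. by rewrite /T2 (linearZZ Q) (linearZZ R) scalerBr. Qed.

Lemma OD0 x y : has_ubound (Eset _ _ Bv T1) -> has_ubound (Eset _ _ Bv T2) ->
  Normc.normc (Bv (Q y) x + Bv (R x) y) <=
  (omega Bv T1 + omega Bv T2) / 2 * (nv x + nv y).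
Proof.
move=> ub1 ub2.
set G1 := Bv (T1 x) y + Bv (T1 y) x.
set G2 := Bv (T2 y) x - Bv (T2 x) y.
have e1 : (Bv (Q y) x + Bv (R x) y) *+ 2 = G1 + G2.
  rewrite /G1 /G2 /T1 /T2 !BvB !BvD mulr2n; ring.
have e2 : G1 *+ 2 = Bv (T1 (x + 1 *: y)) (x + 1 *: y) - Bv (T1 (x + (-1) *: y)) (x + (-1) *: y).
  rewrite !(fexp _ T1lin) c1 c2 /G1 mulr2n; ring.
have e3 : ('i%C * G2) *+ 2 = Bv (T2 (x + 'i%C *: y)) (x + 'i%C *: y)
   - Bv (T2 (x + (- 'i%C) *: y)) (x + (- 'i%C) *: y).
  rewrite !(fexp _ T2lin) c3 c4 /G2 mulr2n; ring.
have K1 := @omegaK _ _ _ BvL BvR Bvpos _ T1Z ub1.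
have K2 := @omegaK _ _ _ BvL BvR Bvpos _ T2Z ub2.
have n1 : nv (x + 1 *: y) + nv (x + (-1) *: y) = (nv x + nv y) *+ 2.
  by apply: nsum; cplx.
have n2 : nv (x + 'i%C *: y) + nv (x + (- 'i%C) *: y) = (nv x + nv y) *+ 2.
  by apply: nsum; cplx.
set n := nv x + nv y.
set w1 := omega Bv T1; set w2 := omega Bv T2.
have hG1 : Normc.normc G1 <= w1 * n.
  have : Normc.normc G1 *+ 2 <= (w1 * n) *+ 2.
    rewrite -normcMn e2; apply: le_trans (le_normcD _ _) _; rewrite normcN.
    apply: le_trans (lerD (K1 _) (K1 _)) _.
    by rewrite -mulrDr n1 mulrnAr.
  rewrite !mulr2n; lra.
have hG2 : Normc.normc G2 <= w2 * n.
  have : Normc.normc G2 *+ 2 <= (w2 * n) *+ 2.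
    rewrite -(c11 _ G2) -normcMn e3; apply: le_trans (le_normcD _ _) _; rewrite normcN.
    apply: le_trans (lerD (K2 _) (K2 _)) _.
    by rewrite -mulrDr n2 mulrnAr.
  rewrite !mulr2n; lra.
have hO : Normc.normc (Bv (Q y) x + Bv (R x) y) *+ 2 <= w1 * n + w2 * n.
  rewrite -normcMn e1; apply: le_trans (le_normcD _ _) _; lra.
have -> : (w1 + w2) / 2 * n = (w1 * n + w2 * n) / 2 by ring.
move: hO; rewrite mulr2n; lra.
Qed.

Lemma OD1 x y tau : 0 < tau -> has_ubound (Eset _ _ Bv T1) -> has_ubound (Eset _ _ Bv T2) ->
  Normc.normc (Bv (Q y) x + Bv (R x) y) <=
  (omega Bv T1 + omega Bv T2) / 2 * (tau * nv x + nv y / tau).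
Proof.
move=> tp ub1 ub2.
set t := Num.sqrt tau.
have t0 : 0 < t by rewrite /t sqrtr_gt0.
have tt : t * t = tau by rewrite -expr2 /t sqr_sqrtr // ltW.
have ti : t^-1 * t^-1 = tau^-1 by rewrite -invfM tt.
have one : ((1:RR)%:C)%C = 1 by cplx.
have := OD0 ((t%:C)%C *: x) (((t^-1)%:C)%C *: y) ub1 ub2.
rewrite (linearZZ Q) (linearZZ R) !BvZ !BvZr !c9 !mulrA !c10 mulVf ?mulfV ?gt_eqF // one !mul1r.
rewrite !c7 tt ti [tau^-1 * _]mulrC.
by [].
Qed.

Lemma blkZ a z : block2 P Q R S (a *: z) = a *: block2 P Q R S z.
Proof.
case: z => x y; rewrite /block2 /= (linearZZ P) (linearZZ Q) (linearZZ R) (linearZZ S).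
by rewrite -!scalerDr.
Qed.

Lemma blk_exp x y : B2 (block2 P Q R S (x, y)) (x, y) =
  Bv (P x) x + Bv (Q y) x + Bv (R x) y + Bv (S y) y.
Proof.
rewrite /ipA /ip2 /diag2 /block2 /=.
have := BvD (P x) (Q y) x; have := BvD (R x) (S y) y; rewrite /ipA => -> ->; ring.
Qed.

Lemma n2e x y : complex.Re (B2 (x, y) (x, y)) = nv x + nv y.
Proof. by rewrite /ipA /ip2 /diag2 /= c8. Qed.

Lemma main_sec :
  let wA := fun T : V -> V => omega (ipA ip A) T in
  let rhs := (wA P + wA S
              + Num.sqrt ((wA P - wA S) ^+ 2
                          + (wA (fun x => Q x + R x) + wA (fun x => Q x - R x)) ^+ 2)) / 2 in
  omega (ipA (ip2 ip) (diag2 A)) (block2 P Q R S) <= rhs /\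
  rhs <= Num.max (wA P) (wA S)
         + (wA (fun x => Q x + R x) + wA (fun x => Q x - R x)) / 2.
Proof.
move=> wA rhs.
have p0 : 0 <= wA P := omega_ge0 _ _ _ P.
have s0 : 0 <= wA S := omega_ge0 _ _ _ S.
have c0 : 0 <= wA T1 + wA T2 by apply: addr_ge0; apply: omega_ge0.
split; last by rewrite /rhs; exact: second_real.
have rhs0 : 0 <= rhs.
  by rewrite /rhs; apply: divr_ge0 => //; apply: addr_ge0; [apply: addr_ge0 | apply: sqrtr_ge0].
set E2 := Eset _ _ B2 (block2 P Q R S).
case: (pselect (has_sup E2)) => [[ne ub2] | nh]; last first.
  have -> : omega B2 (block2 P Q R S) = 0 by apply: sup_out.
  done.
have K2 := @omegaK _ _ _ B2L B2R B2pos _ blkZ ub2.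
have nv0 : nv 0 = 0 by rewrite Bv0l.
have nvi x : nv ('i%C *: x) = nv x by rewrite BvZ BvZr mulrA c5 mul1r.
have nrm x : ipnorm Bv x = 1 -> nv x = 1.
  by move=> hx; apply: (norm1 _ _ x (Re_ge0 _ _ _ Bvpos x) hx).
have hP : has_ubound (Eset _ _ Bv P).
  exists (omega B2 (block2 P Q R S)) => r [x hx <-].
  have := K2 (x, 0); rewrite blk_exp n2e (nrm x hx) nv0 addr0 mulr1.
  by rewrite !raddf0 !Bv0l !Bv0r !addr0.
have hS : has_ubound (Eset _ _ Bv S).
  exists (omega B2 (block2 P Q R S)) => r [x hx <-].
  have := K2 (0, x); rewrite blk_exp n2e (nrm x hx) nv0 add0r mulr1.
  by rewrite !raddf0 !Bv0l !Bv0r !add0r.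
have KP := @omegaK _ _ _ BvL BvR Bvpos _ (linearZZ P) hP.
have KS := @omegaK _ _ _ BvL BvR Bvpos _ (linearZZ S) hS.
have h1 : has_ubound (Eset _ _ Bv T1).
  exists (omega B2 (block2 P Q R S) * 2 + wA P + wA S) => r [x hx <-].
  have nx1 := nrm x hx.
  have := K2 (x, x); rewrite blk_exp n2e nx1.
  have e : Bv (T1 x) x = (Bv (P x) x + Bv (Q x) x + Bv (R x) x + Bv (S x) x)
     - Bv (P x) x - Bv (S x) x by rewrite /T1 BvD; ring.
  rewrite e => hb; apply: le_trans (normc3 _ _ _) _.
  have := KP x; have := KS x; rewrite nx1 !mulr1 /wA; lra.
have h2 : has_ubound (Eset _ _ Bv T2).
  exists (omega B2 (block2 P Q R S) * 2 + wA P + wA S) => r [x hx <-].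
  have nx1 := nrm x hx.
  have := K2 (x, 'i%C *: x); rewrite blk_exp n2e nvi nx1.
  rewrite (linearZZ Q) (linearZZ S) !BvZ !BvZr !mulrA c5 mul1r c3.
  have e : 'i%C * Bv (T2 x) x =
     (Bv (P x) x + 'i%C * Bv (Q x) x + - 'i%C * Bv (R x) x + Bv (S x) x)
     - Bv (P x) x - Bv (S x) x by rewrite /T2 BvB; ring.
  rewrite -(c11 _ (Bv (T2 x) x)) e => hb; apply: le_trans (normc3 _ _ _) _.
  have := KP x; have := KS x; rewrite nx1 !mulr1 /wA; lra.
apply: (@ge_sup _ E2 rhs ne) => r [[x y] hz <-].
have hn := norm1 _ _ (x, y) (Re_ge0 _ _ _ B2pos (x, y)) hz; rewrite n2e in hn.
rewrite blk_exp.
apply: (@final_real _ (wA P) (wA S) (wA T1 + wA T2)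
   (Num.sqrt ((wA P - wA S) ^+ 2 + (wA T1 + wA T2) ^+ 2)) (nv x) (nv y) _
   (Normc.normc (Bv (Q y) x + Bv (R x) y))) => //.
- exact: sqrtr_ge0.
- by rewrite sqr_sqrtr // addr_ge0 // sqr_ge0.
- exact: (Re_ge0 _ _ _ Bvpos).
- exact: (Re_ge0 _ _ _ Bvpos).
- rewrite (_ : Bv (P x) x + Bv (Q y) x + Bv (R x) y + Bv (S y) y =
      Bv (P x) x + Bv (S y) y + (Bv (Q y) x + Bv (R x) y)); last by ring.
  apply: le_trans (le_normcD _ _) _; rewrite lerD2r.
  apply: le_trans (le_normcD _ _) _.
  exact: lerD (KP x) (KS y).
- by move=> tau tp; apply: OD1.
Qed.
End Main.

Theorem theorem2p9 (RR : realType) (V : lmodType RR[i]) (ip : V -> V -> RR[i])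
    (hH : is_hilbert ip)
    (A : {linear V -> V}) (hA : positive_op ip A) (hA0 : exists x : V, A x != 0)
    (P Q R S : {linear V -> V})
    (hP : in_BA ip A P) (hQ : in_BA ip A Q)
    (hR : in_BA ip A R) (hS : in_BA ip A S) :
  let wA := fun T : V -> V => omega (ipA ip A) T in
  let rhs := (wA P + wA S
              + Num.sqrt ((wA P - wA S) ^+ 2
                          + (wA (fun x => Q x + R x) + wA (fun x => Q x - R x)) ^+ 2)) / 2 in
  omega (ipA (ip2 ip) (diag2 A)) (block2 P Q R S) <= rhs /\
  rhs <= Num.max (wA P) (wA S)
         + (wA (fun x => Q x + R x) + wA (fun x => Q x - R x)) / 2.
Proof.
exact: (@main_sec RR V ip A hH hA.2 P Q R S).
Qed.
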